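(* For any matroid $M$ (not necessarily realizable) on $E=\{0,\dots,n\}$, the tuples $([\mathcal S_M]_\sigma)_\sigma$ and $([\mathcal Q_M]_\sigma)_\sigma$ of Laurent polynomials defined by $[\mathcal S_M]_\sigma=\sum_{i\in B_\sigma(M)}T_i^{-1}$ and $[\mathcal Q_M]_\sigma=\sum_{i\notin B_\sigma(M)}T_i^{-1}$ are well-defined elements of $K_T^0(X_E)$ (i.e. lie in the image of the restriction map), and $[\mathcal S_M]+[\mathcal Q_M]=[\underline{\mathbb C}^E_{\mathrm{inv}}]$.
   Context: $T=(\mathbb C^* )^E$; $X_E$ is the permutohedral variety (toric variety of the fan in $\mathbb R^E/\mathbb R\mathbf 1$ with cones $\operatorname{Cone}(\overline{\mathbf e}_{S_1},\dots,\overline{\mathbf e}_{S_k})$ for chains of nonempty proper subsets), whose $T$-fixed points $p_\sigma$ are indexed by permutations $\sigma$ of $E$. The restriction map $K_T^0(X_E)\to\prod_{\sigma}\mathbb Z[T_0^{\pm1},\dots,T_n^{\pm1}]$ is injective, with image the tuples $(f_\sigma)$ such that $f_\sigma\equiv f_{\sigma'}\bmod(1-T_{\sigma(i+1)}/T_{\sigma(i)})$ whenever $\sigma'=\sigma\circ(i,i+1)$. $B_\sigma(M)$ is the lexicographically first basis of $M$ for the order $\sigma(0)\prec\cdots\prec\sigma(n)$. $\underline{\mathbb C}^E_{\mathrm{inv}}=X_E\times\mathbb C^E$ with $T$ acting by $t\cdot x=(t_i^{-1}x_i)$; its class restricts to $\sum_{i\in E}T_i^{-1}$ at every $p_\sigma$.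 *)

(* Defs.v *)
From HB Require Import structures.
From mathcomp Require Import all_boot all_order all_algebra all_fingroup.
From mathcomp Require Import fraction.
From mathcomp Require Import mpoly.

Set Implicit Arguments.
Unset Strict Implicit.
Unset Printing Implicit Defensive.

Import GRing.Theory.
Local Open Scope ring_scope.

(* Ground set E = {0,...,n} is 'I_n.+1. *)

Definition basis_exchange (n : nat) (B : {set {set 'I_n.+1}}) : Prop :=
  forall B1 B2, B1 \in B -> B2 \in B ->
  forall x, x \in B1 :\: B2 ->
  exists2 y, y \in B2 :\: B1 & (y |: (B1 :\ x)) \in B.

Record matroid (n : nat) := Matroid {
  mbases : {set {set 'I_n.+1}};
  mbases_nonempty : mbases != set0;
  mbases_exchange : basis_exchange mbases
}.

Fixpoint lexle (s t : seq nat) : bool :=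
  match s, t with
  | [::], _ => true
  | _ :: _, [::] => false
  | x :: s', y :: t' => (x < y)%N || ((x == y) && lexle s' t')
  end.

(* Position of x in the order sigma(0) < ... < sigma(n) is sigma^-1(x). *)
Definition pos (n : nat) (s : {perm 'I_n.+1}) (x : 'I_n.+1) : nat :=
  nat_of_ord ((s^-1)%g x).

Definition lexkey (n : nat) (s : {perm 'I_n.+1}) (A : {set 'I_n.+1}) : seq nat :=
  sort leq [seq pos s x | x <- enum A].

Definition is_lexfirst_basis (n : nat) (M : matroid n) (s : {perm 'I_n.+1})
  (B : {set 'I_n.+1}) : bool :=
  (B \in mbases M) &&
  [forall B' in mbases M, lexle (lexkey s B) (lexkey s B')].

Definition Bsigma (n : nat) (M : matroid n) (s : {perm 'I_n.+1}) : {set 'I_n.+1} :=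
  odflt set0 [pick B | is_lexfirst_basis M s B].

(* realised inside the fraction field of Z[T_0,...,T_n]. *)
Definition Frac (n : nat) := {fraction {mpoly int[n.+1]}}.

Definition tofr (n : nat) (p : {mpoly int[n.+1]}) : Frac n := FracField.tofrac p.

Definition T (n : nat) (i : 'I_n.+1) : Frac n := tofr ('X_i : {mpoly int[n.+1]}).

Definition is_laurent (n : nat) (f : Frac n) : Prop :=
  exists (p : {mpoly int[n.+1]}) (k : nat),
    f = tofr p / (\prod_(i < n.+1) T i) ^+ k.

Definition laurent_cong (n : nat) (a b : 'I_n.+1) (f g : Frac n) : Prop :=
  exists2 h : Frac n, is_laurent h & f - g = (1 - T a / T b) * h.

(* sigma' = sigma o (i, i+1): in mathcomp, (t * s) x = s (t x). *)
Definition adj_swap (n : nat) (s : {perm 'I_n.+1}) (i : 'I_n) : {perm 'I_n.+1} :=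
  (tperm (widen_ord (leqnSn n) i) (lift ord0 i) * s)%g.

Definition in_KT (n : nat) (f : {perm 'I_n.+1} -> Frac n) : Prop :=
  (forall s, is_laurent (f s)) /\
  (forall (s : {perm 'I_n.+1}) (i : 'I_n),
     laurent_cong (s (lift ord0 i)) (s (widen_ord (leqnSn n) i))
                  (f s) (f (adj_swap s i))).

Definition classSM (n : nat) (M : matroid n) (s : {perm 'I_n.+1}) : Frac n :=
  \sum_(i in Bsigma M s) (T i)^-1.

Definition classQM (n : nat) (M : matroid n) (s : {perm 'I_n.+1}) : Frac n :=
  \sum_(i in ~: Bsigma M s) (T i)^-1.

Definition classCEinv (n : nat) (s : {perm 'I_n.+1}) : Frac n :=
  \sum_(i < n.+1) (T i)^-1.

(* Main.v *)
Require Import Defs.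
From HB Require Import structures.
From mathcomp Require Import all_boot all_order all_algebra all_fingroup.
From mathcomp Require Import fraction.
From mathcomp Require Import mpoly.
From mathcomp Require Import zify ring.
Import GRing.Theory.
Local Open Scope ring_scope.

Lemma lexle_refl s : lexle s s.
Proof. by elim: s => //= x s ->; rewrite eqxx orbT. Qed.

Lemma lexle_total s t : lexle s t || lexle t s.
Proof.
elim: s t => [|x s IH] [|y t] //=.
case: (ltngtP x y) => //= ->; by rewrite orbT.
Qed.

Lemma lexle_trans s t u : lexle s t -> lexle t u -> lexle s u.
Proof.
elim: s t u => [|x s IH] [|y t] [|z u] //=.
case/orP => [xy|/andP[/eqP exy st]]; case/orP => [yz|/andP[/eqP eyz tu]];
  subst => //.
- by rewrite (ltn_trans xy yz).
- by rewrite xy.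
- by rewrite yz.
- by rewrite eqxx (IH _ _ st tu) orbT.
Qed.

Lemma seq_min (T0 : eqType) (r : rel T0) : (forall x y, r x y || r y x) ->
  (forall x y z, r x y -> r y z -> r x z) ->
  forall s (x0 : T0), x0 \in s -> exists2 x, x \in s & all (r x) s.
Proof.
move=> tot tr; elim => [|y s IH] x0 //= _.
case: s IH => [|z s] IH.
  exists y; first by rewrite mem_head.
  by rewrite /= andbT; case/orP: (tot y y).
have [x xs allx] := IH z (mem_head _ _).
case/orP: (tot y x) => [yx|xy].
- exists y; first by rewrite mem_head.
  have H : {in y :: z :: s, forall w, r y w}.
    move=> w; rewrite in_cons => /orP [/eqP ->|ws].
      by case/orP: (tot y y).
    exact: tr yx ((allP allx) w ws).
  exact: (introT allP H).
- exists x; first by rewrite in_cons xs orbT.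
  have H : {in y :: z :: s, forall w, r x w}.
    move=> w; rewrite in_cons => /orP [/eqP ->|ws]; first exact: xy.
    exact: (allP allx) w ws.
  exact: (introT allP H).
Qed.

Lemma lex_first_diff (s t : seq nat) : sorted ltn s -> sorted ltn t ->
  size s = size t -> lexle s t ->
  s = t \/ exists m, [/\ m \in s, m \notin t &
                         forall k, (k < m)%N -> (k \in s) = (k \in t)].
Proof.
elim: s t => [|x s IH] [|y t] //=; first by left.
move=> ps pt [sz].
have ax := order_path_min ltn_trans ps.
have ay := order_path_min ltn_trans pt.
case/orP => [xy|/andP[/eqP exy st]].
- right; exists x; split; first by rewrite mem_head.
  + rewrite in_cons negb_or; apply/andP; split; first by rewrite neq_ltn xy.
    by apply/negP => /(allP ay) /= ?; lia.
  + move=> k kx; rewrite !in_cons.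
    have -> : (k \in s) = false by apply/negbTE/negP => /(allP ax) /= ?; lia.
    have -> : (k \in t) = false by apply/negbTE/negP => /(allP ay) /= ?; lia.
    have -> : (k == x) = false by apply/negbTE; rewrite neq_ltn kx.
    have -> : (k == y) = false by apply/negbTE; rewrite neq_ltn (ltn_trans kx xy).
    by [].
- subst y.
  case: (IH t (path_sorted ps) (path_sorted pt) sz st) => [->|[m [ms mt mk]]].
    by left.
  right; exists m; split.
  + by rewrite in_cons ms orbT.
  + rewrite in_cons negb_or mt andbT.
    have := (allP ax) m ms => /= ?; apply/eqP => ?; lia.
  + by move=> k km; rewrite !in_cons mk.
Qed.

Section Pos.
Variable n : nat.
Implicit Types (r : {perm 'I_n.+1}) (A B D : {set 'I_n.+1}).

Lemma pos_inj r : injective (pos r).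
Proof. by move=> x y /val_inj /perm_inj. Qed.

Lemma mem_key r A x : (pos r x \in lexkey r A) = (x \in A).
Proof. by rewrite /lexkey mem_sort (mem_map (@pos_inj r)) mem_enum. Qed.

Lemma key_in r A k : k \in lexkey r A -> exists2 x, x \in A & k = pos r x.
Proof. by rewrite /lexkey mem_sort => /mapP [x]; rewrite mem_enum => xA ->; exists x. Qed.

Lemma key_sorted r A : sorted ltn (lexkey r A).
Proof.
rewrite ltn_sorted_uniq_leq sort_uniq sort_sorted ?andbT; last exact: leq_total.
by rewrite (map_inj_uniq (@pos_inj r)) enum_uniq.
Qed.

Lemma key_size r A : size (lexkey r A) = #|A|.
Proof. by rewrite /lexkey size_sort size_map cardE. Qed.

Definition FD r A D := exists m, [/\ m \in A, m \notin D &
   forall x, (pos r x < pos r m)%N -> (x \in A) = (x \in D)].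

Lemma lexle_FD r A D : #|A| = #|D| -> lexle (lexkey r A) (lexkey r D) ->
  A = D \/ FD r A D.
Proof.
move=> cAD le.
case: (lex_first_diff _ _ (key_sorted r A) (key_sorted r D)
        (etrans (key_size r A) (etrans cAD (esym (key_size r D)))) le)
  => [eq|[m [mA mD mk]]].
  by left; apply/setP => x; rewrite -!(mem_key r) eq.
right; have [x0 x0A em] := @key_in r A m mA.
exists x0; split => //.
  by rewrite -(mem_key r) -em.
by move=> x lt; rewrite -!(mem_key r); apply: mk; rewrite em.
Qed.

End Pos.
Arguments pos_inj {n} r [x1 x2].
Arguments FD {n} r A D.
Arguments lexle_FD {n} r A D.
Arguments mem_key {n} r A x.


Section Mat.
Variable n : nat.
Variable M : matroid n.
Implicit Types (r : {perm 'I_n.+1}) (A B C D : {set 'I_n.+1}).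

Lemma exch {B1 B2 x} : B1 \in mbases M -> B2 \in mbases M -> x \in B1 -> x \notin B2 ->
  exists2 y, (y \in B2) && (y \notin B1) & (y |: (B1 :\ x)) \in mbases M.
Proof.
move=> h1 h2 x1 x2.
have xin : x \in B1 :\: B2 by rewrite inE x1 x2.
have [y] := @mbases_exchange n M B1 B2 h1 h2 x xin.
by rewrite inE andbC => ? ?; exists y.
Qed.

Lemma card_le_aux B2 k : forall B1, B1 \in mbases M -> B2 \in mbases M ->
   #|B1 :\: B2| = k -> (#|B1| <= #|B2|)%N.
Proof.
elim: k => [|k IH] B1 h1 h2 ck.
  apply: subset_leq_card; rewrite -setD_eq0 -cards_eq0; exact/eqP.
have : (0 < #|B1 :\: B2|)%N by rewrite ck.
case/card_gt0P => x; rewrite inE => /andP [xB2 xB1].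
have [y /andP [yB2 yB1] h1'] := exch h1 h2 xB1 xB2.
have e : (y |: (B1 :\ x)) :\: B2 = (B1 :\: B2) :\ x.
  apply/setP => z; rewrite !inE.
  case: (z =P y) => [->|_] /=; first by rewrite yB2 /= andbF.
  by rewrite andbCA.
have c1 : #|y |: (B1 :\ x)| = #|B1|.
  by rewrite cardsU1 (cardsD1 x B1) xB1 inE (negbTE yB1) andbF.
rewrite -c1; apply: IH => //.
move: ck; rewrite e (cardsD1 x (B1 :\: B2)) inE xB1 xB2 /=; lia.
Qed.

Lemma card_bases {B1 B2} : B1 \in mbases M -> B2 \in mbases M -> #|B1| = #|B2|.
Proof.
move=> h1 h2; apply/eqP; rewrite eqn_leq.
by rewrite (card_le_aux B2 _ B1 h1 h2 erefl) (card_le_aux B1 _ B2 h2 h1 erefl).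
Qed.

Definition LF r B := B \in mbases M /\ forall D, D \in mbases M -> D = B \/ FD r B D.

Lemma Bsigma_LF r : LF r (Bsigma M r).
Proof.
have [B0 B0in] : exists B0, B0 \in mbases M.
  by case/set0Pn: (mbases_nonempty M) => B0; exists B0.
have mem_enum_B0 : B0 \in enum (mbases M) by rewrite mem_enum.
have [B Bin Bmin] := @seq_min _ (fun A D => lexle (lexkey r A) (lexkey r D))
   (fun x y => lexle_total _ _) (fun x y z => @lexle_trans _ _ _) (enum (mbases M))
   B0 mem_enum_B0.
rewrite mem_enum in Bin.
have lfB : is_lexfirst_basis M r B.
  rewrite /is_lexfirst_basis Bin /=; apply/forall_inP => D DB.
  by apply: (allP Bmin); rewrite mem_enum.
rewrite /Bsigma; case: pickP => [B' hB'|/(_ B)]; last by rewrite lfB.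
case/andP: hB' => B'in /forall_inP hB'.
split => // D Din.
case: (lexle_FD _ _ _ (card_bases B'in Din) (hB' D Din)) => [->|]; by [left | right].
Qed.

End Mat.
Arguments exch {n M B1 B2 x}.
Arguments card_bases {n M B1 B2}.
Arguments LF {n} M r B.
Arguments Bsigma_LF {n} M r.


Lemma nat_aux a b : (a <= b)%N -> b != a -> b != a.+1 -> (a.+1 < b)%N.
Proof. move=> h /eqP h1 /eqP h2; lia. Qed.

Section KLsec.
Variable n : nat.
Variable M : matroid n.
Implicit Types (r : {perm 'I_n.+1}) (A B C D : {set 'I_n.+1}).

Lemma KL r B u v D : LF M r B -> pos r v = (pos r u).+1 -> u \in B -> v \notin B ->
  D \in mbases M -> (forall x, (pos r x < pos r u)%N -> (x \in B) = (x \in D)) ->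
  v \in D -> u \notin D -> (v |: (B :\ u)) \in mbases M.
Proof.
move=> [Bb lfB] pv uB vB.
suff H : forall k D, D \in mbases M ->
    (forall x, (pos r x < pos r u)%N -> (x \in B) = (x \in D)) ->
    v \in D -> u \notin D -> #|D :\: B| = k -> (v |: (B :\ u)) \in mbases M.
  by move=> Db ag vD uD; exact: H _ D Db ag vD uD erefl.
have vu : v != u by apply/eqP => e; move: vB; rewrite e uB.
elim=> [|k IH] {}D Db ag vD uD ck.
  move/eqP: ck; rewrite cards_eq0 => /eqP e.
  have : v \in D :\: B by rewrite inE vB vD.
  by rewrite e inE.
case: (boolP ((D :\: B) \subset [set v])) => sub.
  have DC : D \subset v |: (B :\ u).
    apply/subsetP => z zD; rewrite !inE.
    case: (boolP (z \in B)) => zB.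
      rewrite andbT; case: (z =P u) => [e|_]; last by rewrite orbT.
      by move: uD; rewrite -e zD.
    have : z \in D :\: B by rewrite inE zB zD.
    by move/(subsetP sub); rewrite inE => ->.
  have cC : #|v |: (B :\ u)| = #|D|.
    rewrite cardsU1 (card_bases Db Bb) (cardsD1 u B) uB inE (negbTE vB) andbF.
    by [].
  have -> : v |: (B :\ u) = D.
    by apply/esym/eqP; rewrite eqEcard DC cC leqnn.
  exact: Db.
case/subsetPn: sub => x; rewrite inE => /andP [xB xD]; rewrite inE => xv.
have [y /andP [yB yD] D'b] := exch Db Bb xD xB.
have px : (pos r u <= pos r x)%N.
  rewrite leqNgt; apply/negP => /ag; by rewrite xD (negbTE xB).
have py : (pos r u <= pos r y)%N.
  rewrite leqNgt; apply/negP => /ag; by rewrite yB (negbTE yD).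
case: (y =P u) => [yu|yu].
  subst y.
  case: (lfB _ D'b) => [e|[m [mB mD' mag]]].
    by move: vB; rewrite -e !inE vD (negbTE vu) /= andbT => /negPn/eqP e'; move: xv; rewrite e' eqxx.
  have pm : (pos r u <= pos r m)%N.
    rewrite leqNgt; apply/negP => /ag e.
    move: mD'; rewrite !inE -e mB andbT; case: (m =P u) => //= _.
    by case: (m =P x) => // e'; move: xB; rewrite -e' mB.
  have mu : m != u by apply/eqP => e; move: mD'; rewrite e !inE eqxx.
  have mv : m != v by apply/eqP => e; move: vB; rewrite -e mB.
  have pmu : pos r m != pos r u by apply/eqP => /pos_inj /eqP; rewrite (negbTE mu).
  have pmv : pos r m != pos r v by apply/eqP => /pos_inj /eqP; rewrite (negbTE mv).
  have : (pos r v < pos r m)%N by rewrite pv; apply: nat_aux pm pmu _; rewrite -pv.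
  move/mag; rewrite (negbTE vB) !inE vD (negbTE vu) /= andbT.
  by case: (v =P x) => // e'; move: xv; rewrite e' eqxx.
apply: (IH (y |: (D :\ x))) => //.
- move=> z pz; rewrite ag // !inE.
  have -> : (z == y) = false.
    by apply/negbTE/eqP => e; move: pz; rewrite e ltnNge py.
  have -> : (z == x) = false.
    by apply/negbTE/eqP => e; move: pz; rewrite e ltnNge px.
  by [].
- rewrite !inE vD andbT; case: (v =P x) => [e|_]; last by rewrite orbT.
  by move: xv; rewrite e eqxx.
- rewrite !inE negb_or (negbTE uD) andbF andbT; apply/eqP => e; exact: yu (esym e).
- have e : (y |: (D :\ x)) :\: B = (D :\: B) :\ x.
    apply/setP => z; rewrite !inE.
    case: (z =P y) => [->|_] /=; first by rewrite yB /= andbF.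
    by rewrite andbCA.
  by move: ck; rewrite e (cardsD1 x (D :\: B)) inE xD xB /= add1n => -[].
Qed.

End KLsec.
Arguments KL {n M r B u v D}.

Definition tv (i p : nat) : nat := if p == i then i.+1 else if p == i.+1 then i else p.

Lemma flip_nat i p q : (p < q)%N -> (tv i q < tv i p)%N -> p = i /\ q = i.+1.
Proof. rewrite /tv; case: (q =P i); case: (q =P i.+1); case: (p =P i); case: (p =P i.+1); lia. Qed.

Lemma pre_nat i p : (tv i p < i)%N = (p < i)%N.
Proof. rewrite /tv; case: eqP => [->|_]; first by rewrite ltnn ltnNge leqnSn.
case: eqP => [->|_] //; by rewrite ltnn ltnNge leqnSn. Qed.

Section Swap.
Variable n : nat.
Variable M : matroid n.
Variable s : {perm 'I_n.+1}.
Variable i : 'I_n.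

Local Notation w := (widen_ord (leqnSn n) i).
Local Notation l := (lift ord0 i).
Local Notation a := (s l).
Local Notation b := (s w).
Local Notation s' := (adj_swap s i).

Lemma pos_swap x : pos s' x = tv i (pos s x).
Proof.
rewrite /pos /adj_swap invMg permM tpermV.
case: tpermP => [->|->|/eqP zw /eqP zl].
- by rewrite lift0 /tv /= eqxx.
- by rewrite /tv lift0 /= (gtn_eqF (ltnSn i)) eqxx.
- rewrite /tv.
  have -> : (val ((s^-1)%g x) == i) = false.
    by apply/negbTE; apply: contra zw => /eqP e; apply/eqP/val_inj.
  have -> : (val ((s^-1)%g x) == i.+1) = false.
    by apply/negbTE; apply: contra zl => /eqP e; apply/eqP/val_inj; rewrite e; exact: (esym (lift0 i)).
  by [].
Qed.

Lemma pos_b : pos s b = i.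
Proof. by rewrite /pos permK. Qed.

Lemma pos_a : pos s a = i.+1.
Proof. rewrite /pos permK; exact: lift0. Qed.

Lemma flip x y : (pos s x < pos s y)%N -> (pos s' y < pos s' x)%N -> x = b /\ y = a.
Proof.
rewrite !pos_swap => h1 h2; have [e1 e2] := flip_nat _ _ _ h1 h2.
by split; apply: (pos_inj s); rewrite ?pos_a ?pos_b.
Qed.

Lemma swap_main : Bsigma M s' = Bsigma M s \/
  [/\ b \in Bsigma M s, a \notin Bsigma M s & Bsigma M s' = a |: (Bsigma M s :\ b)].
Proof.
suff H : forall B B', LF M s B -> LF M s' B' ->
    B' = B \/ [/\ b \in B, a \notin B & B' = a |: (B :\ b)].
  exact: H (Bsigma_LF M s) (Bsigma_LF M s').
move=> B B' [Bb lfB] [B'b lfB'].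
case: (lfB _ B'b) => [->|[m [mB mB' magm]]]; first by left.
case: (lfB' _ Bb) => [e|[m' [m'B' m'B magm']]]; first by left; rewrite e.
have mm' : m != m' by apply/eqP => e; move: m'B; rewrite -e mB.
have lt1 : (pos s m < pos s m')%N.
  case: (ltngtP (pos s m) (pos s m')) => // h.
  - by move: (magm _ h); rewrite m'B' (negbTE m'B).
  - by move/pos_inj: h => e; move: mm'; rewrite e eqxx.
have lt2 : (pos s' m' < pos s' m)%N.
  case: (ltngtP (pos s' m') (pos s' m)) => // h.
  - by move: (magm' _ h); rewrite mB (negbTE mB').
  - by move/pos_inj: h => e; move: mm'; rewrite e eqxx.
have [em em'] := flip _ _ lt1 lt2; subst m m'.
have pab : pos s a = (pos s b).+1 by rewrite pos_a pos_b.
have C_b := KL (conj Bb lfB) pab mB m'B B'b magm m'B' mB'.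
have pba : pos s' b = (pos s' a).+1.
  by rewrite !pos_swap pos_a pos_b /tv eqxx (gtn_eqF (ltnSn i)) eqxx.
have ag' : forall x, (pos s' x < pos s' a)%N -> (x \in B') = (x \in B).
  move=> x; rewrite !pos_swap pos_a {2}/tv (gtn_eqF (ltnSn i)) eqxx pre_nat => h.
  by rewrite magm // pos_b.
have E_b := KL (conj B'b lfB') pba m'B' mB' Bb ag' mB m'B.
case: (lfB' _ C_b) => [eC|[z [zB' zC zag]]]; first by right; split.
have za : z != a by apply/eqP => e; move: zC; rewrite e !inE eqxx.
have zb : z != b by apply/eqP => e; move: mB'; rewrite -e zB'.
have zB : z \notin B by move: zC; rewrite !inE zb (negbTE za) /=.
have zE : z \in b |: (B' :\ a) by rewrite !inE za zB' orbT.
case: (lfB _ E_b) => [eE|[w [wB wE wag]]].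
  by move: zE; rewrite eE (negbTE zB).
have wb : w != b by apply/eqP => e; move: wE; rewrite e !inE eqxx.
have wa : w != a by apply/eqP => e; move: m'B; rewrite -e wB.
have wB' : w \notin B' by move: wE; rewrite !inE (negbTE wb) wa.
have wC : w \in a |: (B :\ b) by rewrite !inE wb wB orbT.
have wz : w != z by apply/eqP => e; move: zB; rewrite -e wB.
have l1 : (pos s w < pos s z)%N.
  case: (ltngtP (pos s w) (pos s z)) => // h.
  - by move: (wag _ h); rewrite zE (negbTE zB).
  - by move/pos_inj: h => e; move: wz; rewrite e eqxx.
have l2 : (pos s' z < pos s' w)%N.
  case: (ltngtP (pos s' z) (pos s' w)) => // h.
  - by move: (zag _ h); rewrite wC (negbTE wB').
  - by move/pos_inj: h => e; move: wz; rewrite e eqxx.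
have [e _] := flip _ _ l1 l2.
by move: wb; rewrite e eqxx.
Qed.

End Swap.
Arguments swap_main {n} M s i.
Lemma T_neq0 n (i : 'I_n.+1) : T i != 0.
Proof.
rewrite /T /tofr tofrac_eq0; apply/eqP => H.
have := @mcoeffX n.+1 int U_(i) U_(i).
by rewrite eqxx H mcoeff0 => /eqP.
Qed.

Lemma Tinv_eq n (i : 'I_n.+1) :
  (T i)^-1 = tofr (\prod_(j | j != i) 'X_j) / (\prod_(j < n.+1) T j).
Proof.
rewrite [\prod_(j < n.+1) T j](bigD1 i) //= /tofr rmorph_prod.
have P0 : \prod_(j | j != i) T j != 0.
  by apply/prodf_neq0 => j _; exact: T_neq0.
have -> : \prod_(j | j != i) FracField.tofrac ('X_j : {mpoly int[n.+1]}) = \prod_(j | j != i) T j by [].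
by rewrite invfM mulrCA divff ?mulr1.
Qed.


Lemma laurent_sum n (A : {set 'I_n.+1}) : is_laurent (\sum_(i in A) (T i)^-1).
Proof.
exists (\sum_(i in A) \prod_(j | j != i) 'X_j), 1%N.
rewrite expr1 /tofr rmorph_sum mulr_suml; apply: eq_bigr => i _; exact: Tinv_eq.
Qed.

Lemma laurent_Tinv n (i : 'I_n.+1) : is_laurent (- (T i)^-1).
Proof.
exists (- \prod_(j | j != i) 'X_j), 1%N.
by rewrite expr1 /tofr rmorphN mulNr Tinv_eq.
Qed.

Lemma laurentN n (f : Frac n) : is_laurent f -> is_laurent (- f).
Proof. by case=> p [k ->]; exists (- p), k; rewrite /tofr rmorphN mulNr. Qed.

Lemma laurent0 n : is_laurent (0 : Frac n).
Proof. by exists 0, 0%N; rewrite /tofr rmorph0 mul0r. Qed.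

Lemma HE n (M : matroid n) s : classSM M s + classQM M s = classCEinv s.
Proof.
rewrite /classSM /classQM /classCEinv [RHS](bigID (mem (Bsigma M s))) /=.
by congr (_ + _); apply: eq_bigl => j; rewrite inE.
Qed.

Lemma alg_id (F : fieldType) (x y S : F) : y != 0 -> x != 0 ->
  (x^-1 + S) - (y^-1 + S) = (1 - y / x) * - y^-1.
Proof. by move=> hy hx; field; rewrite hx hy. Qed.

Lemma SM_cong n (M : matroid n) s i :
  exists2 h, is_laurent h & classSM M s - classSM M (adj_swap s i) =
     (1 - T (s (lift ord0 i)) / T (s (widen_ord (leqnSn n) i))) * h.
Proof.
case: (swap_main M s i) => [e|[bB aB e]].
  by exists 0; [exact: laurent0 | rewrite /classSM e subrr mulr0].
exists (- (T (s (lift ord0 i)))^-1); first exact: laurent_Tinv.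
rewrite /classSM e big_setU1 /=; last by rewrite !inE (negbTE aB) andbF.
rewrite (big_setD1 _ bB) /=.
by apply: alg_id; exact: T_neq0.
Qed.

Lemma opp_diff (F : zmodType) (C x y : F) : (C - x) - (C - y) = - (x - y).
Proof. by rewrite opprB addrC addrA subrK opprB. Qed.

Theorem proposition3p8 (n : nat) (M : matroid n) :
  in_KT (classSM M) /\ in_KT (classQM M) /\
  (forall s : {perm 'I_n.+1}, classSM M s + classQM M s = classCEinv s).
Proof.
have HQ s : classQM M s = classCEinv s - classSM M s by rewrite -(HE _ M s) [classSM M s + _]addrC addrK.
split; [|split]; last exact: HE.
- split; first by move=> s; exact: laurent_sum.
  by move=> s i; have [h hl e] := SM_cong _ M s i; exists h.
- split; first by move=> s; exact: laurent_sum.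
  move=> s i; have [h hl e] := SM_cong _ M s i; exists (- h); first exact: laurentN.
  by rewrite !HQ opp_diff e mulrN.
Qed.
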